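(* Let $(L,\vee,\wedge,0,1)$ be a complemented modular lattice with $0\neq1$, let $a\in L$ and let $A$ be a non-empty subset of $L$. Then $(a^+,\le)$, $(A^+,\le)$ and $(a^{++},\le)$ are antichains.
   Context: For $a\in L$, $a^+:=\{x\in L\mid a\vee x=1,\ a\wedge x=0\}$ (the set of all complements of $a$). For $A\subseteq L$, $A^+:=\{x\in L\mid a\vee x=1\text{ and }a\wedge x=0\text{ for all }a\in A\}$, and $a^{++}:=(a^+)^+$. *)

(* Defs.v *)
From HB Require Import structures.
From mathcomp Require Import all_boot all_order.
Set Implicit Arguments. Unset Strict Implicit. Unset Printing Implicit Defensive.
Import Order.TTheory.
Local Open Scope order_scope.

Definition modular_lattice (d : Order.disp_t) (L : tbLatticeType d) : Prop :=
  forall x y z : L, x <= z -> x `|` (y `&` z) = (x `|` y) `&` z.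

Definition complemented_lattice (d : Order.disp_t) (L : tbLatticeType d) : Prop :=
  forall a : L, exists x : L, a `|` x = \top /\ a `&` x = \bot.

Definition compl_set (d : Order.disp_t) (L : tbLatticeType d) (a : L) : L -> Prop :=
  fun x => a `|` x = \top /\ a `&` x = \bot.

Definition compl_setA (d : Order.disp_t) (L : tbLatticeType d) (A : L -> Prop) : L -> Prop :=
  fun x => forall a, A a -> a `|` x = \top /\ a `&` x = \bot.

Definition antichain (d : Order.disp_t) (L : tbLatticeType d) (S : L -> Prop) : Prop :=
  forall x y : L, S x -> S y -> x <= y -> x = y.

(* Main.v *)
Require Import Defs.
From mathcomp Require Import all_boot all_order.
Local Open Scope order_scope.
Import Order.TTheory.

Lemma key (d : Order.disp_t) (L : tbLatticeType d)
  (Hmod : modular_lattice L) (b x y : L) :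
  b `|` x = \top -> b `&` x = \bot -> b `|` y = \top -> b `&` y = \bot ->
  x <= y -> x = y.
Proof.
move=> h1 h2 h3 h4 hxy.
have := Hmod x b y hxy.
rewrite h4 joinx0 (joinC x b) h1 meet1x => ->.
by [].
Qed.

Theorem corollary1 (d : Order.disp_t) (L : tbLatticeType d)
  (Hmod : modular_lattice L) (Hcompl : complemented_lattice L)
  (H01 : (\bot : L) <> \top) (a : L) (A : L -> Prop) (HA : exists b, A b) :
  antichain (compl_set a) /\ antichain (compl_setA A)
  /\ antichain (compl_setA (compl_set a)).
Proof.
split; [|split].
- move=> x y [h1 h2] [h3 h4]; exact: key h1 h2 h3 h4.
- case: HA => b Ab x y hx hy.
  case: (hx b Ab) => h1 h2; case: (hy b Ab) => h3 h4; exact: key h1 h2 h3 h4.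
- case: (Hcompl a) => b hb x y hx hy.
  case: (hx b hb) => h1 h2; case: (hy b hb) => h3 h4; exact: key h1 h2 h3 h4.
Qed.
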